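(* Let $4\le\beta\le n-2$ and let $\gamma_1,\gamma_2,\gamma_3$ be positive integers with $\gamma_1+\gamma_2+\gamma_3<n$ such that $\min(\gamma_1,\gamma_2)\ge 2$, or $\min(\gamma_1,\gamma_3)\ge 2$, or $\min(\gamma_2,\gamma_3)\ge 2$. Then $\mathcal T_{(n),(\beta),(\gamma_1,\gamma_2,\gamma_3)}$ has infinitely many $G$-orbits.
   Context: $\mathbb F$ is an infinite field of characteristic $\ne 2$. Equip $\mathbb F^{2n}$ (canonical basis $e_1,\ldots,e_{2n}$) with the symmetric bilinear form $(e_i,e_j)=\delta_{i,2n+1-j}$, and let $G={\rm O}_{2n}(\mathbb F)$ be its isometry group. A subspace $V$ is isotropic if $(V,V)=\{0\}$. For a sequence ${\bf a}=(\alpha_1,\ldots,\alpha_p)$ of positive integers with $\sum\alpha_j\le n$, $M_{\bf a}$ is the set of flags $V_1\subset\cdots\subset V_p$ in $\mathbb F^{2n}$ with $\dim V_j=\alpha_1+\cdots+\alpha_j$ and $V_p$ isotropic. $\mathcal T_{{\bf a},{\bf b},{\bf c}}=M_{\bf a}\times M_{\bf b}\times M_{\bf c}$ with the diagonal $G$-action. *)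

(* Defs.v *)
From HB Require Import structures.
From mathcomp Require Import all_boot all_order all_algebra.
Set Implicit Arguments. Unset Strict Implicit. Unset Printing Implicit Defensive.
Import GRing.Theory.
Local Open Scope ring_scope.

(* Ambient space F^(2n) as row vectors 'rV[F]_(n.*2); basis e_1..e_2n is
   delta rows 0..2n-1 (0-based). *)
Definition Vsp (F : fieldType) (n : nat) := {vspace 'rV[F]_(n.*2)}.

(* Gram matrix: (e_i, e_j) = delta_{i, 2n+1-j} (1-based) i.e. i0 + j0 + 1 = 2n *)
Definition gramJ (F : fieldType) (n : nat) : 'M[F]_(n.*2) :=
  \matrix_(i, j) ((i + j).+1 == n.*2)%:R.

Definition form (F : fieldType) (n : nat) (u v : 'rV[F]_(n.*2)) : F :=
  (u *m gramJ F n *m v^T) 0 0.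

Definition isotropic (F : fieldType) (n : nat) (V : Vsp F n) : Prop :=
  forall u v, u \in V -> v \in V -> form u v = 0.

(* G = O_2n(F): invertible g (acting by v |-> v *m g) preserving the form *)
Definition orthogonal_mx (F : fieldType) (n : nat) (g : 'M[F]_(n.*2)) : Prop :=
  g \in unitmx /\ g *m gramJ F n *m g^T = gramJ F n.

Definition act_vs (F : fieldType) (n : nat) (g : 'M[F]_(n.*2)) (V : Vsp F n)
  : Vsp F n := (linfun (mulmxr g) @: V)%VS.

Definition in_M (F : fieldType) (n : nat) (a : seq nat) (fl : seq (Vsp F n))
  : Prop :=
  size fl = size a /\
  (forall j, (j < size a)%N -> \dim (nth 0%VS fl j) = \sum_(i < j.+1) nth 0%N a i) /\
  (forall j, (j.+1 < size a)%N -> (nth 0%VS fl j <= nth 0%VS fl j.+1)%VS) /\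
  isotropic (last 0%VS fl).

Definition triple (F : fieldType) (n : nat) :=
  (seq (Vsp F n) * seq (Vsp F n) * seq (Vsp F n))%type.

Definition in_T (F : fieldType) (n : nat) (a b c : seq nat) (t : triple F n)
  : Prop := in_M a t.1.1 /\ in_M b t.1.2 /\ in_M c t.2.

Definition act_triple (F : fieldType) (n : nat) (g : 'M[F]_(n.*2))
  (t : triple F n) : triple F n :=
  (map (act_vs g) t.1.1, map (act_vs g) t.1.2, map (act_vs g) t.2).

Definition same_orbit (F : fieldType) (n : nat) (t t' : triple F n) : Prop :=
  exists g, orthogonal_mx g /\ act_triple g t = t'.

Definition infinitely_many_orbits (F : fieldType) (n : nat) (a b c : seq nat)
  : Prop :=
  ~ exists s : seq (triple F n),
      forall t, in_T a b c t -> exists2 t', t' \in s & same_orbit t t'.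

(* Main.v *)
Require Import Defs.
From HB Require Import structures.
From mathcomp Require Import all_boot all_order all_algebra.
From mathcomp Require Import zify ring.
From Stdlib Require Import Classical.
Set Implicit Arguments. Unset Strict Implicit. Unset Printing Implicit Defensive.
Import GRing.Theory.
Local Open Scope ring_scope.

Section Basics.
Variables (F : fieldType) (n : nat).
Local Notation vec := 'rV[F]_(n.*2).
Local Notation form := (@Defs.form F n).

Definition ev (k : nat) : vec := \row_(j < n.*2) ((j : nat) == k)%:R.
Definition cf (k : nat) (u : vec) : F := \sum_(j < n.*2) ((j : nat) == k)%:R * u 0 j.

Lemma cfD k (u v : vec) : cf k (u + v) = cf k u + cf k v.
Proof. by rewrite /cf -big_split; apply: eq_bigr => i _; rewrite mxE mulrDr. Qed.
Lemma cfZ k a (u : vec) : cf k (a *: u) = a * cf k u.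
Proof. by rewrite /cf mulr_sumr; apply: eq_bigr => i _; rewrite mxE mulrCA. Qed.
Lemma cfN k (u : vec) : cf k (- u) = - cf k u.
Proof. by rewrite -scaleN1r cfZ mulN1r. Qed.
Lemma cfB k (u v : vec) : cf k (u - v) = cf k u - cf k v.
Proof. by rewrite cfD cfN. Qed.
Lemma cf_ev j k : cf j (ev k) = ((k == j) && (k < n.*2)%N)%:R.
Proof.
rewrite /cf; case: (ltnP k n.*2) => hk.
  rewrite (bigD1 (Ordinal hk)) //= big1 ?addr0.
    by rewrite mxE eqxx mulr1 andbT eq_sym.
  move=> i /eqP hi; rewrite mxE.
  have -> : ((i : nat) == k) = false by apply/eqP => h; apply: hi; apply: val_inj.
  by rewrite mulr0.
rewrite andbF big1 // => i _; rewrite mxE.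
have -> : ((i : nat) == k) = false by apply/eqP => h; have := ltn_ord i; lia.
by rewrite mulr0.
Qed.

Definition lin (L : vec -> F) := forall a u v, L (a *: u + v) = a * L u + L v.

Lemma lin0 L : lin L -> L 0 = 0.
Proof.
move=> HL; have := HL 1 0 0; rewrite scaler0 addr0 mul1r => h.
by apply: (addrI (L 0)); rewrite addr0 -h.
Qed.

Lemma span_lin0 L (HL : lin L) (X : seq vec) v :
  (forall x, x \in X -> L x = 0) -> v \in <<X>>%VS -> L v = 0.
Proof.
move=> HX Hv; rewrite (coord_span (X := in_tuple X) Hv).
apply: (big_ind (fun x => L x = 0)); first exact: lin0.
  by move=> x y hx hy; rewrite -[x]scale1r HL hx hy mulr0 addr0.
move=> i _; rewrite -[_ *: _]addr0 HL (lin0 HL) addr0.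
by rewrite HX ?mulr0 // mem_nth.
Qed.

Lemma notin_span L (HL : lin L) (X : seq vec) v :
  (forall x, x \in X -> L x = 0) -> L v != 0 -> v \notin <<X>>%VS.
Proof. by move=> HX Hv; apply/negP => /(span_lin0 HL HX) h; rewrite h eqxx in Hv. Qed.

Lemma lin_cf k : lin (cf k).
Proof. by move=> a u v; rewrite cfD cfZ. Qed.

Definition padl (a m : nat) : seq vec := [seq ev k | k <- iota a m].

Lemma mem_padl a m x : x \in padl a m -> exists2 k, (a <= k < a + m)%N & x = ev k.
Proof. by case/mapP => k; rewrite mem_iota => hk ->; exists k. Qed.

Lemma free_padl a m : (a + m <= n.*2)%N -> free (padl a m).
Proof.
elim: m a => [|m IH] a h; first exact: nil_free.
rewrite /padl /= free_cons; apply/andP; split; last by apply: IH; lia.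
apply: (notin_span (lin_cf a)).
  move=> x /mem_padl [k hk ->]; rewrite cf_ev.
  by have -> : (k == a) = false by apply/eqP; lia.
rewrite cf_ev eqxx /=; have -> : (a < n.*2)%N by lia.
by rewrite oner_eq0. 
Qed.


Lemma cf_ord (i : 'I_(n.*2)) (u : vec) : cf i u = u 0 i.
Proof.
rewrite /cf (bigD1 i) //= eqxx mul1r big1 ?addr0 // => j /eqP hj.
have -> : ((j : nat) == i) = false by apply/eqP => h; apply: hj; apply: val_inj.
by rewrite mul0r.
Qed.

Lemma formE (u v : vec) : form u v =
  \sum_(i < n.*2) \sum_(j < n.*2) u 0 i * ((i + j).+1 == n.*2)%:R * v 0 j.
Proof.
rewrite /form mxE exchange_big /=; apply: eq_bigr => j _.
rewrite !mxE mulr_suml; apply: eq_bigr => i _; by rewrite !mxE.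
Qed.

Lemma formEl (u v : vec) : form u v = \sum_(i < n.*2) u 0 i * cf (n.*2 - i.+1)%N v.
Proof.
rewrite formE; apply: eq_bigr => i _; rewrite /cf mulr_sumr; apply: eq_bigr => j _.
have -> : ((i + j).+1 == n.*2)%N = ((j : nat) == (n.*2 - i.+1)%N).
  by move: (ltn_ord i) (ltn_ord j) => hi hj; apply/idP/idP => /eqP h; apply/eqP; lia.
by rewrite mulrA [_ * _%:R]mulrC.
Qed.

Lemma formEr (u v : vec) : form u v = \sum_(j < n.*2) cf (n.*2 - j.+1)%N u * v 0 j.
Proof.
rewrite formE exchange_big; apply: eq_bigr => j _; rewrite /cf mulr_suml; apply: eq_bigr => i _.
have -> : ((i + j).+1 == n.*2)%N = ((i : nat) == (n.*2 - j.+1)%N).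
  by move: (ltn_ord i) (ltn_ord j) => hi hj; apply/idP/idP => /eqP h; apply/eqP; lia.
by rewrite [_%:R * _]mulrC.
Qed.

Lemma form_evl k (v : vec) : (k < n.*2)%N -> form (ev k) v = cf (n.*2 - k.+1)%N v.
Proof.
move=> hk; rewrite formEl (bigD1 (Ordinal hk)) //= big1 ?addr0; first by rewrite mxE eqxx mul1r.
move=> i /eqP hi; rewrite mxE.
have -> : ((i : nat) == k) = false by apply/eqP => h; apply: hi; apply: val_inj.
by rewrite mul0r.
Qed.

Lemma form_evr (u : vec) k : (k < n.*2)%N -> form u (ev k) = cf (n.*2 - k.+1)%N u.
Proof.
move=> hk; rewrite formEr (bigD1 (Ordinal hk)) //= big1 ?addr0; first by rewrite mxE eqxx mulr1.
move=> i /eqP hi; rewrite mxE.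
have -> : ((i : nat) == k) = false by apply/eqP => h; apply: hi; apply: val_inj.
by rewrite mulr0.
Qed.

Lemma formDl (u1 u2 v : vec) : form (u1 + u2) v = form u1 v + form u2 v.
Proof. by rewrite /form !mulmxDl mxE. Qed.
Lemma formDr (u v1 v2 : vec) : form u (v1 + v2) = form u v1 + form u v2.
Proof. by rewrite /form linearD /= mulmxDr mxE. Qed.
Lemma formZl a (u v : vec) : form (a *: u) v = a * form u v.
Proof. by rewrite /form -!scalemxAl mxE. Qed.
Lemma formZr a (u v : vec) : form u (a *: v) = a * form u v.
Proof. by rewrite /form linearZ /= -scalemxAr mxE. Qed.
Lemma formNl (u v : vec) : form (- u) v = - form u v.
Proof. by rewrite -scaleN1r formZl mulN1r. Qed.
Lemma formNr (u v : vec) : form u (- v) = - form u v.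
Proof. by rewrite -scaleN1r formZr mulN1r. Qed.
Lemma formBl (u1 u2 v : vec) : form (u1 - u2) v = form u1 v - form u2 v.
Proof. by rewrite formDl formNl. Qed.
Lemma formBr (u v1 v2 : vec) : form u (v1 - v2) = form u v1 - form u v2.
Proof. by rewrite formDr formNr. Qed.

Lemma lin_formr (u : vec) : lin (form u).
Proof. by move=> a v w; rewrite formDr formZr. Qed.
Lemma lin_forml (v : vec) : lin (fun u => form u v).
Proof. by move=> a u w; rewrite formDl formZl. Qed.

Lemma iso_span (X : seq vec) :
  (forall a b, a \in X -> b \in X -> form a b = 0) ->
  forall u v, u \in <<X>>%VS -> v \in <<X>>%VS -> form u v = 0.
Proof.
move=> H u v Hu Hv; apply: (span_lin0 (lin_forml v)) Hu => a Ha.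
by apply: (span_lin0 (lin_formr a)) Hv => b Hb; apply: H.
Qed.

Definition fzero (u : vec) := forall k, (n <= k < n.*2)%N -> cf k u = 0.

Lemma form_fzero (u v : vec) : fzero u -> fzero v -> form u v = 0.
Proof.
move=> hu hv; rewrite formEl big1 // => i _.
case: (ltnP i n) => hi.
  by rewrite hv ?mulr0 //; have := ltn_ord i; lia.
by rewrite -cf_ord hu ?mul0r //; have := ltn_ord i; lia.
Qed.

Lemma form_ev_ev i j : form (ev i) (ev j) = (((j == (n.*2 - i.+1)%N) && (j < n.*2)%N) && (i < n.*2)%N)%:R.
Proof.
case: (ltnP i n.*2) => hi; first by rewrite form_evl // cf_ev andbT.
rewrite andbF formEl big1 // => k _; rewrite mxE.
have -> : ((k : nat) == i) = false by apply/eqP => h; have := ltn_ord k; lia.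
by rewrite mul0r.
Qed.

Lemma span_core_pad L (HL : lin L) (core : seq vec) a m :
  all (fun x => L x == 0) core -> (forall k, (a <= k < a + m)%N -> L (ev k) = 0) ->
  forall v, v \in <<core ++ padl a m>>%VS -> L v = 0.
Proof.
move=> Hc Hp v hv; apply: (span_lin0 HL _ hv) => x; rewrite mem_cat => /orP [/(allP Hc)/eqP // | /mem_padl [k hk ->]].
exact: Hp.
Qed.

Lemma iso_core_pad (core : seq vec) a m :
  (forall u v, u \in core -> v \in core -> form u v = 0) ->
  (forall u k, u \in core -> (a <= k < a + m)%N -> form u (ev k) = 0 /\ form (ev k) u = 0) ->
  (forall k l, (a <= k < a + m)%N -> (a <= l < a + m)%N -> form (ev k) (ev l) = 0) ->
  forall u v, u \in <<core ++ padl a m>>%VS -> v \in <<core ++ padl a m>>%VS -> form u v = 0.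
Proof.
move=> H1 H2 H3; apply: iso_span => u v; rewrite !mem_cat.
case/orP => [hu | /mem_padl [k hk ->]]; case/orP => [hv | /mem_padl [l hl ->]].
- exact: H1.
- by case: (H2 u l hu hl).
- by case: (H2 v k hv hk).
- exact: H3.
Qed.

Lemma iso_core_pad' (core : seq vec) a m :
  all (fun u => all (fun v => form u v == 0) core) core ->
  (forall k, (a <= k < a + m)%N -> all (fun u => (form u (ev k) == 0) && (form (ev k) u == 0)) core) ->
  (forall k l, (a <= k < a + m)%N -> (a <= l < a + m)%N -> form (ev k) (ev l) = 0) ->
  forall u v, u \in <<core ++ padl a m>>%VS -> v \in <<core ++ padl a m>>%VS -> form u v = 0.
Proof.
move=> H1 H2 H3; apply: iso_core_pad => //.
  by move=> u v hu hv; apply/eqP; move/allP: H1 => /(_ u hu)/allP/(_ v hv).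
by move=> u k hu hk; move/allP: (H2 k hk) => /(_ u hu)/andP[/eqP-> /eqP->].
Qed.

Lemma free_cons_cp L (HL : lin L) v (core : seq vec) a m :
  all (fun x => L x == 0) core -> (forall k, (a <= k < a + m)%N -> L (ev k) = 0) ->
  L v != 0 -> free (core ++ padl a m) -> free ((v :: core) ++ padl a m).
Proof.
move=> Hc Hp Hv Hf; rewrite free_cons Hf andbT; apply: (notin_span HL) Hv => x.
by rewrite mem_cat => /orP [/(allP Hc)/eqP // | /mem_padl [k hk ->]]; apply: Hp.
Qed.

Lemma dim_free (X : seq vec) : free X -> \dim <<X>>%VS = size X.
Proof. by move/eqP. Qed.

Lemma vec_ext (u v : vec) : (forall k, cf k u = cf k v) -> u = v.
Proof. by move=> h; apply/rowP => i; rewrite -!cf_ord h. Qed.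

Lemma act_mem (g : 'M[F]_(n.*2)) (X : {vspace vec}) u : u \in X -> u *m g \in act_vs g X.
Proof. by move=> hu; rewrite /act_vs; have := memv_img (linfun (mulmxr g)) hu; rewrite lfunE. Qed.

Lemma act_memP (g : 'M[F]_(n.*2)) (X : {vspace vec}) w :
  w \in act_vs g X -> exists2 u, u \in X & w = u *m g.
Proof. by case/memv_imgP => u hu ->; exists u; rewrite // lfunE. Qed.

Lemma form_g (g : 'M[F]_(n.*2)) (u v : vec) : g *m gramJ F n *m g^T = gramJ F n ->
  form (u *m g) (v *m g) = form u v.
Proof.
move=> hg; rewrite /Defs.form trmx_mul !mulmxA.
have -> : u *m g *m gramJ F n *m g^T = u *m (g *m gramJ F n *m g^T) by rewrite !mulmxA.
by rewrite hg.
Qed.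

Lemma act_perp (g : 'M[F]_(n.*2)) (X : {vspace vec}) z : g *m gramJ F n *m g^T = gramJ F n ->
  (forall t, t \in X -> form z t = 0) -> forall t, t \in act_vs g X -> form (z *m g) t = 0.
Proof. by move=> hg hz t /act_memP [u hu ->]; rewrite form_g // hz. Qed.

Lemma act_mul (g h : 'M[F]_(n.*2)) (X : {vspace vec}) : act_vs (g *m h) X = act_vs h (act_vs g X).
Proof.
rewrite /act_vs -limg_comp; congr (_ @: _)%VS; apply/lfunP => u.
by rewrite comp_lfunE !lfunE /= mulmxA.
Qed.

Lemma act_one (X : {vspace vec}) : act_vs 1%:M X = X.
Proof.
rewrite /act_vs (_ : linfun _ = \1%VF) ?lim1g //; apply/lfunP => u.
by rewrite id_lfunE lfunE /= mulmx1.
Qed.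

Lemma actT_mul (g h : 'M[F]_(n.*2)) (t : triple F n) : act_triple (g *m h) t = act_triple h (act_triple g t).
Proof.
case: t => [[a b] c]; rewrite /act_triple /= -!map_comp; congr (_, _, _); apply: eq_map => X /=; exact: act_mul.
Qed.

Lemma actT_one (t : triple F n) : act_triple 1%:M t = t.
Proof.
case: t => [[a b] c]; rewrite /act_triple /=; congr (_, _, _); rewrite -[RHS]map_id; apply: eq_map => X; exact: act_one.
Qed.

Lemma orth_inv (g h : 'M[F]_(n.*2)) : g *m gramJ F n *m g^T = gramJ F n -> h \in unitmx ->
  h *m gramJ F n *m h^T = gramJ F n ->
  (g *m invmx h) *m gramJ F n *m (g *m invmx h)^T = gramJ F n.
Proof.
move=> hg hu hh.
have hi : invmx h *m gramJ F n *m (invmx h)^T = gramJ F n.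
  rewrite -{1}hh !mulmxA mulVmx // mul1mx -mulmxA -trmx_mul mulVmx // trmx1 mulmx1 //.
have -> : (g *m invmx h) *m gramJ F n *m (g *m invmx h)^T = g *m (invmx h *m gramJ F n *m (invmx h)^T) *m g^T.
  by rewrite trmx_mul !mulmxA.
by rewrite hi hg.
Qed.

End Basics.

Ltac nat_eval :=
  repeat match goal with
  | |- context [ ?a == ?b ] =>
      lazymatch type of a with nat =>
      let H := fresh "H" in
      first [ have H : (a == b) = true by apply/eqP; lia
            | have H : (a == b) = false by apply/eqP; lia ]; rewrite H; clear H end
  | |- context [ leq ?a ?b ] =>
      let H := fresh "H" in
      first [ have H : (leq a b) = true by apply/idP; lia
            | have H : (leq a b) = false by apply/negbTE/negP => ?; lia ]; rewrite H; clear H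
  end.

Lemma avoid (A T : eqType) (P : A -> T -> Prop) :
  (forall t x z, P x t -> P z t -> x = z) ->
  forall s : seq T, exists L : seq A, forall x, x \notin L -> forall t, t \in s -> ~ P x t.
Proof.
move=> Hu; elim=> [|t s [L HL]]; first by exists [::].
case: (classic (exists x, P x t)) => [[x0 hx0] | hno].
- exists (x0 :: L) => x; rewrite in_cons negb_or => /andP [hx hL] t'.
  rewrite in_cons => /orP [/eqP -> | ht'] hP.
  + by move: hx; rewrite (Hu _ _ _ hP hx0) eqxx.
  + exact: (HL x hL t' ht' hP).
- exists L => x hL t'; rewrite in_cons => /orP [/eqP -> | ht'] hP.
  + by apply: hno; exists x.
  + exact: (HL x hL t' ht' hP).
Qed.

Inductive kase := K221 | K212 | K122.

Section Config.
Variables (F : fieldType) (n : nat).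
Hypothesis Hn : (6 <= n)%N.
Local Notation vec := 'rV[F]_(n.*2).
Local Notation form := (@Defs.form F n).
Local Notation ev := (@ev F n).
Local Notation cf := (@cf F n).
Local Notation padl := (@padl F n).

Definition e_ i : vec := ev i.-1.
Definition f_ i : vec := ev (n.*2 - i)%N.
Definition ce i (u : vec) := cf i.-1 u.
Definition cF i (u : vec) := cf (n.*2 - i)%N u.
Definition un1 : vec := f_ 2 + e_ 1 - e_ 6.
Definition un2 : vec := f_ 3 + e_ 4.
Definition un3 : vec := f_ 4 - e_ 3.
Definition up : vec := f_ 5 + e_ 1.
Definition uc : vec := f_ 6 + e_ 2.
Definition U3core : seq vec := [:: un1; un2; un3; up; uc].
Definition U1core (k : kase) : seq vec :=
  if k is K122 then [:: up + un3] else [:: up + un3; uc + un2].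
Definition U2core (k : kase) (x : F) : seq vec :=
  match k with
  | K221 => [:: up + un3; uc + un2; un1 + x *: un3; un2]
  | K212 => [:: up + un3; uc + un2; x *: up - un1]
  | K122 => [:: up + un3; un1 - x *: up; uc + un2]
  end.

Ltac ev_simpl := rewrite /ce /cF /un1 /un2 /un3 /up /uc /e_ /f_ ?(cfD, cfB, cfN, cfZ) ?cf_ev; nat_eval; rewrite /=.


Ltac form_simpl := rewrite /un1 /un2 /un3 /up /uc /e_ /f_ ?(formDl, formDr, formBl, formBr, formZl, formZr, formNl, formNr) ?form_ev_ev; nat_eval; rewrite /=.

Lemma lin_cF i : lin (cF i). Proof. exact: (@lin_cf F n). Qed.
Lemma lin_ce i : lin (ce i). Proof. exact: (@lin_cf F n). Qed.

Definition Vg : seq vec := padl 0 n.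
Definition Vs : {vspace vec} := <<Vg>>%VS.

Lemma V_fzero v : v \in Vs -> fzero v.
Proof.
move=> hv k hk; apply: (span_lin0 (lin_cf k) _ hv) => x /mem_padl [j hj ->].
by rewrite cf_ev; nat_eval.
Qed.

Lemma ev_inV k : (k < n)%N -> ev k \in Vs.
Proof. by move=> hk; apply: memv_span; apply/mapP; exists k; rewrite // mem_iota. Qed.


Lemma V_iso : isotropic Vs.
Proof.
move=> u v hu hv; apply: (iso_span (X := Vg)) hu hv => a b /mem_padl [i hi ->] /mem_padl [j hj ->].
by rewrite form_ev_ev; nat_eval.
Qed.

Ltac all_core := rewrite /= ?andbT /U3core /U1core /U2core /= ?andbT; try done; repeat (apply/andP; split); apply/eqP; ev_simpl; try ring.
Ltac pad_core := let k := fresh "k" in let hk := fresh "hk" in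
  move=> k hk; rewrite /ce /cF ?(cfD, cfB, cfN, cfZ) ?cf_ev; nat_eval; rewrite /=; try ring.

Ltac lin_tac := let a := fresh in let u := fresh in let v := fresh in
  move=> a u v; rewrite /ce /cF ?(cfD, cfZ, cfB, cfN); ring.
Ltac nz_tac := ev_simpl; rewrite ?(mulr0, mul0r, addr0, add0r, subr0, sub0r, mulr1, mul1r, oppr0) ?oppr_eq0 ?oner_eq0 //.

Section WU3.
Variables pW p3 : nat.
Hypothesis HpW : (6 + pW <= n)%N.
Hypothesis Hp3 : (6 + p3 <= n)%N.

Definition Wg : seq vec := [:: f_ 1; f_ 2; f_ 3; f_ 4] ++ padl 6 pW.
Definition Ws : {vspace vec} := <<Wg>>%VS.

Lemma W_ce i w : (1 <= i <= 6)%N -> w \in Ws -> ce i w = 0.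
Proof. move=> hi; apply: span_core_pad; [exact: lin_ce | all_core | pad_core]. Qed.

Lemma W_cF i w : (5 <= i <= n)%N -> w \in Ws -> cF i w = 0.
Proof. move=> hi; apply: span_core_pad; [exact: lin_cF | all_core | pad_core]. Qed.

Lemma f_inW i : (1 <= i <= 4)%N -> f_ i \in Ws.
Proof.
move=> hi; apply: memv_span; rewrite mem_cat; apply/orP; left.
by case: i hi => [|[|[|[|[|i]]]]] //= _; rewrite !inE eqxx ?orbT.
Qed.


Lemma W_free : free Wg.
Proof.
apply: (@free_cons_cp _ _ (cF 1) (lin_cF 1) _ [:: f_ 2; f_ 3; f_ 4]); [all_core | pad_core | nz_tac | ].
apply: (@free_cons_cp _ _ (cF 2) (lin_cF 2) _ [:: f_ 3; f_ 4]); [all_core | pad_core | nz_tac | ].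
apply: (@free_cons_cp _ _ (cF 3) (lin_cF 3) _ [:: f_ 4]); [all_core | pad_core | nz_tac | ].
apply: (@free_cons_cp _ _ (cF 4) (lin_cF 4) _ [::]); [all_core | pad_core | nz_tac | ].
by rewrite /=; apply: free_padl; lia.
Qed.

Lemma W_dim : \dim Ws = (4 + pW)%N.
Proof. by rewrite /Ws dim_free ?W_free // size_cat size_map size_iota. Qed.

Lemma W_iso : isotropic Ws.
Proof.
move=> u v; apply: iso_core_pad'.
- by rewrite /=; repeat (apply/andP; split); apply/eqP; form_simpl.
- by move=> k hk; rewrite /=; repeat (apply/andP; split); apply/eqP; form_simpl.
- by move=> k l hk hl; rewrite form_ev_ev; nat_eval.
Qed.

Definition U3s : {vspace vec} := <<U3core ++ padl 6 p3>>%VS.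

Lemma U3_free : free (U3core ++ padl 6 p3).
Proof.
apply: (@free_cons_cp _ _ (cF 2) (lin_cF 2)); [all_core | pad_core | nz_tac | ].
apply: (@free_cons_cp _ _ (cF 3) (lin_cF 3)); [all_core | pad_core | nz_tac | ].
apply: (@free_cons_cp _ _ (cF 4) (lin_cF 4)); [all_core | pad_core | nz_tac | ].
apply: (@free_cons_cp _ _ (cF 5) (lin_cF 5)); [all_core | pad_core | nz_tac | ].
apply: (@free_cons_cp _ _ (cF 6) (lin_cF 6)); [all_core | pad_core | nz_tac | ].
by rewrite /=; apply: free_padl; lia.
Qed.

Lemma U3_dim : \dim U3s = (5 + p3)%N.
Proof. by rewrite /U3s dim_free ?U3_free // size_cat size_map size_iota. Qed.

Lemma U3_iso : isotropic U3s.
Proof.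
move=> u v; apply: iso_core_pad'.
- by rewrite /U3core /=; repeat (apply/andP; split); apply/eqP; form_simpl; try ring.
- by move=> k hk; rewrite /U3core /=; repeat (apply/andP; split); apply/eqP; form_simpl; try ring.
- by move=> k l hk hl; rewrite form_ev_ev; nat_eval.
Qed.

Lemma U3_f1 u : u \in U3s -> cF 1 u = 0.
Proof. apply: span_core_pad; [exact: lin_cF | all_core | pad_core]. Qed.
Lemma U3_e2 u : u \in U3s -> ce 2 u - cF 6 u = 0.
Proof. apply: (@span_core_pad _ _ (fun u => ce 2 u - cF 6 u)); [lin_tac | all_core | pad_core]. Qed.
Lemma U3_e4 u : u \in U3s -> ce 4 u - cF 3 u = 0.
Proof. apply: (@span_core_pad _ _ (fun u => ce 4 u - cF 3 u)); [lin_tac | all_core | pad_core]. Qed.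
Lemma U3_e3 u : u \in U3s -> ce 3 u + cF 4 u = 0.
Proof. apply: (@span_core_pad _ _ (fun u => ce 3 u + cF 4 u)); [lin_tac | all_core | pad_core]. Qed.
Lemma U3_e1 u : u \in U3s -> ce 1 u - cF 2 u - cF 5 u = 0.
Proof. apply: (@span_core_pad _ _ (fun u => ce 1 u - cF 2 u - cF 5 u)); [lin_tac | all_core | pad_core]. Qed.

Lemma core_inU3 u : u \in U3core -> u \in U3s.
Proof. by move=> hu; apply: memv_span; rewrite mem_cat hu. Qed.
End WU3.
Section Cases.
Variable k : kase.
Variables p1 p2 : nat.
Hypothesis Hp2 : (6 + p2 <= n)%N.
Hypothesis Hp12 : (p1 <= p2)%N.

Definition U1s : {vspace vec} := <<U1core k ++ padl 6 p1>>%VS.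
Definition U2s (x : F) : {vspace vec} := <<U2core k x ++ padl 6 p2>>%VS.
Definition Ukeep (x : F) : {vspace vec} := if k is K122 then U2s x else U1s.

Lemma U1_a u : u \in U1s -> cF 5 u - cF 4 u = 0.
Proof. by apply: (@span_core_pad _ _ (fun u => cF 5 u - cF 4 u)); [lin_tac | case: k; all_core | pad_core]. Qed.
Lemma U1_b u : u \in U1s -> cF 6 u - cF 3 u = 0.
Proof. by apply: (@span_core_pad _ _ (fun u => cF 6 u - cF 3 u)); [lin_tac | case: k; all_core | pad_core]. Qed.
Lemma U1_c u : u \in U1s -> cF 1 u = 0.
Proof. by apply: (@span_core_pad _ _ (fun u => cF 1 u)); [lin_tac | case: k; all_core | pad_core]. Qed.
Lemma U1_d u : u \in U1s -> cF 2 u = 0.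
Proof. by apply: (@span_core_pad _ _ (fun u => cF 2 u)); [lin_tac | case: k; all_core | pad_core]. Qed.

Lemma U2_fun y u : u \in U2s y -> y * cF 2 u - cF 4 u + cF 5 u = 0.
Proof. by apply: (@span_core_pad _ _ (fun u => y * cF 2 u - cF 4 u + cF 5 u)); [lin_tac | case: k; all_core | pad_core]. Qed.

Lemma keep_a x : up + un3 \in Ukeep x.
Proof. by rewrite /Ukeep /U1s /U2s; case: k; apply: memv_span; rewrite mem_cat inE eqxx. Qed.
Lemma keep_b x : uc + un2 \in Ukeep x.
Proof. by rewrite /Ukeep /U1s /U2s; case: k; apply: memv_span; rewrite mem_cat !inE eqxx ?orbT. Qed.

Lemma keep_perp x u : u \in Ukeep x -> form (f_ 2 - f_ 4) u = 0.
Proof.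
rewrite /Ukeep /U1s /U2s; case: k; apply: (@span_core_pad _ _ (form (f_ 2 - f_ 4)) (lin_formr _));
  try (by rewrite /= ?andbT; repeat (apply/andP; split); apply/eqP; form_simpl; try ring);
  by move=> j hj; form_simpl; try ring.
Qed.

Lemma id212 (V : lmodType F) (a b c : V) (x : F) : a + x *: c = x *: (b + c) - (x *: b - a).
Proof. by rewrite [in RHS]scalerDr [in RHS]opprB [in RHS]addrC [in RHS]addrA [in RHS]subrK. Qed.
Lemma id122 (V : lmodType F) (a b c : V) (x : F) : a + x *: c = x *: (b + c) + (a - x *: b).
Proof. by rewrite [in RHS]scalerDr [in RHS]addrC [in RHS]addrA [in RHS]subrK. Qed.

Lemma U2_wit x : un1 + x *: un3 \in U2s x.
Proof.
rewrite /U2s; case: k.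
- by apply: memv_span; rewrite mem_cat !inE eqxx ?orbT.
- rewrite (id212 _ up).
  by apply: rpredB; [apply: rpredZ|]; apply: memv_span; rewrite mem_cat !inE eqxx ?orbT.
- rewrite (id122 _ up).
  by apply: rpredD; [apply: rpredZ|]; apply: memv_span; rewrite mem_cat !inE eqxx ?orbT.
Qed.

Lemma U1_wit : up + un3 \in U1s.
Proof. by rewrite /U1s; case: k; apply: memv_span; rewrite mem_cat !inE eqxx. Qed.

Lemma U1_free : free (U1core k ++ padl 6 p1).
Proof.
case: k.
- apply: (@free_cons_cp _ _ (cF 5) (lin_cF 5)); [all_core | pad_core | nz_tac | ].
  apply: (@free_cons_cp _ _ (cF 6) (lin_cF 6)); [all_core | pad_core | nz_tac | ].
  by rewrite /=; apply: free_padl; lia.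
- apply: (@free_cons_cp _ _ (cF 5) (lin_cF 5)); [all_core | pad_core | nz_tac | ].
  apply: (@free_cons_cp _ _ (cF 6) (lin_cF 6)); [all_core | pad_core | nz_tac | ].
  by rewrite /=; apply: free_padl; lia.
- apply: (@free_cons_cp _ _ (cF 5) (lin_cF 5)); [all_core | pad_core | nz_tac | ].
  by rewrite /=; apply: free_padl; lia.
Qed.

Lemma U2_free x : free (U2core k x ++ padl 6 p2).
Proof.
case: k.
- apply: (@free_cons_cp _ _ (cF 5) (lin_cF 5)); [all_core | pad_core | nz_tac | ].
  apply: (@free_cons_cp _ _ (cF 6) (lin_cF 6)); [all_core | pad_core | nz_tac | ].
  apply: (@free_cons_cp _ _ (cF 2) (lin_cF 2)); [all_core | pad_core | nz_tac | ].
  apply: (@free_cons_cp _ _ (cF 3) (lin_cF 3)); [all_core | pad_core | nz_tac | ].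
  by rewrite /=; apply: free_padl; lia.
- apply: (@free_cons_cp _ _ (cF 4) (lin_cF 4)); [all_core | pad_core | nz_tac | ].
  apply: (@free_cons_cp _ _ (cF 6) (lin_cF 6)); [all_core | pad_core | nz_tac | ].
  apply: (@free_cons_cp _ _ (cF 2) (lin_cF 2)); [all_core | pad_core | nz_tac | ].
  by rewrite /=; apply: free_padl; lia.
- apply: (@free_cons_cp _ _ (cF 4) (lin_cF 4)); [all_core | pad_core | nz_tac | ].
  apply: (@free_cons_cp _ _ (cF 2) (lin_cF 2)); [all_core | pad_core | nz_tac | ].
  apply: (@free_cons_cp _ _ (cF 6) (lin_cF 6)); [all_core | pad_core | nz_tac | ].
  by rewrite /=; apply: free_padl; lia.
Qed.

Definition c1 := size (U1core k).
Definition c2 := if k is K221 then 4%N else 3%N.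

Lemma U1_dim : \dim U1s = (c1 + p1)%N.
Proof. by rewrite /U1s dim_free ?U1_free // size_cat size_map size_iota. Qed.
Lemma U2_dim x : \dim (U2s x) = (c2 + p2)%N.
Proof. by rewrite /U2s dim_free ?U2_free // size_cat size_map size_iota /c2; case: k. Qed.

Lemma U12 x : (U1s <= U2s x)%VS.
Proof.
apply: sub_span => u; rewrite !mem_cat => /orP [hu|/mem_padl [j hj ->]].
  move: hu; case: k => /=; rewrite !inE; [case/orP=> /eqP-> | case/orP=> /eqP-> | move/eqP->]; by rewrite /= ?inE eqxx ?orbT.
by apply/orP; right; apply/mapP; exists j; rewrite // mem_iota; lia.
Qed.

Lemma U23 x p3 : (p2 <= p3)%N -> (U2s x <= U3s p3)%VS.
Proof.
move=> h; apply/span_subvP => u; rewrite mem_cat => /orP [hu|/mem_padl [j hj ->]].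
  have hc : forall v, v \in U3core -> v \in U3s p3 by move=> v hv; apply: core_inU3.
  have : all (fun v => v \in U3s p3) (U2core k x).
    case: k => /=; rewrite ?andbT; repeat (apply/andP; split);
    by repeat first [by apply: hc; rewrite /U3core !inE eqxx ?orbT | apply: rpredB | apply: rpredD | apply: rpredN | apply: rpredZ].
  by move/allP; apply.
by apply: memv_span; rewrite mem_cat; apply/orP; right; apply/mapP; exists j; rewrite // mem_iota; lia.
Qed.

End Cases.
Lemma form_f (u : vec) i : (1 <= i <= 6)%N -> form u (f_ i) = ce i u.
Proof. by move=> hi; rewrite /f_ form_evr /ce; [congr cf; lia | lia]. Qed.
Lemma form_e (u : vec) i : (1 <= i <= 6)%N -> form u (e_ i) = cF i u.
Proof. by move=> hi; rewrite /e_ form_evr /cF; [congr cf; lia | lia]. Qed.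
Lemma V_cF i v : (1 <= i <= 6)%N -> v \in Vs -> cF i v = 0.
Proof. by move=> hi hv; apply: V_fzero => //; lia. Qed.

Lemma cFD i (a b : vec) : cF i (a + b) = cF i a + cF i b. Proof. exact: cfD. Qed.
Lemma ceD i (a b : vec) : ce i (a + b) = ce i a + ce i b. Proof. exact: cfD. Qed.
Lemma cFZ i c (a : vec) : cF i (c *: a) = c * cF i a. Proof. exact: cfZ. Qed.
Lemma cFB i (a b : vec) : cF i (a - b) = cF i a - cF i b. Proof. exact: cfB. Qed.

Section Coord.
Variables (k : kase) (pW p1 p2 p3 : nat).
Hypothesis HpW : (6 + pW <= n)%N.
Hypothesis Hp3 : (6 + p3 <= n)%N.
Hypothesis Hp2 : (6 + p2 <= n)%N.
Hypothesis Hp12 : (p1 <= p2)%N.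

Local Notation W := (Ws pW).
Local Notation U1 := (U1s k p1).
Local Notation U2 := (U2s k p2).
Local Notation U3 := (U3s p3).

Lemma LA w v z : w \in W -> v \in Vs -> (forall t, t \in W -> form z t = 0) ->
  (forall t, t \in U3 -> form z t = 0) -> w = v + z ->
  [/\ cF 1 w = 0, cF 3 w = 0 & cF 4 w = 0].
Proof.
move=> hw hv hzW hzU he.
have hz : z = w - v by rewrite he addrC addKr.
have cz i : (1 <= i <= 6)%N -> cF i z = cF i w by move=> hi; rewrite hz /cF cfB -/(cF i v) V_cF // subr0.
have ez i : (1 <= i <= 4)%N -> ce i z = 0.
  by move=> hi; rewrite -form_f; [apply: hzW; apply: f_inW | ]; lia.
have w6 : cF 6 w = 0 by apply: (W_cF HpW Hp3 _ hw); lia.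
have u1 : form z un1 = 0 by apply: hzU; apply: core_inU3; rewrite !inE eqxx.
have u2 : form z un2 = 0 by apply: hzU; apply: core_inU3; rewrite !inE eqxx ?orbT.
have u3 : form z un3 = 0 by apply: hzU; apply: core_inU3; rewrite !inE eqxx ?orbT.
move: u1 u2 u3; rewrite /un1 /un2 /un3 !(formDr, formBr, formNr) !form_f // !form_e // !cz // !ez // ?w6.
move=> u1 u2 u3; split.
- by rewrite -u1; ring.
- by rewrite -[RHS]oppr0 -u3; ring.
- by rewrite -u2; ring.
Qed.

Lemma LB y w v u : w \in W -> (forall t, t \in Ukeep k p1 p2 y -> form w t = 0) ->
  v \in Vs -> u \in U3 -> w = v + u ->
  [/\ cF 1 w = 0, cF 3 w = 0 & cF 2 w + cF 4 w = 0].
Proof.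
move=> hw hp hv hu he.
have c1 : cF 1 w = 0 by rewrite he cFD (V_cF _ hv) // (U3_f1 HpW Hp3 hu) addr0.
have we i : (1 <= i <= 6)%N -> ce i w = 0 by move=> hi; apply: (W_ce HpW Hp3 _ hw).
have ha := hp _ (keep_a k p1 p2 y).
have hb := hp _ (keep_b k p1 p2 y).
move: ha hb; rewrite /up /un3 /uc /un2 !(formDr, formBr, formNr) !form_f // !form_e // !we // c1.
move=> ha hb; split => //.
- by rewrite -[RHS]oppr0 -ha; ring.
- by rewrite -hb; ring.
Qed.

Lemma LC w u v u1 : w \in W -> u \in U3 -> v \in Vs -> u1 \in U1 ->
  (forall t, t \in W -> form (v + u1) t = 0) -> w = u + (v + u1) ->
  [/\ cF 1 w = 0, cF 3 w = 0 & cF 2 w - cF 4 w = 0].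
Proof.
move=> hw hu hv hu1 hp he.
have we i : (1 <= i <= 6)%N -> ce i w = 0 by move=> hi; apply: (W_ce HpW Hp3 _ hw).
have wf i : (5 <= i <= 6)%N -> cF i w = 0 by move=> hi; apply: (W_cF HpW Hp3 _ hw); lia.
have ez i : (1 <= i <= 4)%N -> ce i (v + u1) = 0.
  by move=> hi; rewrite -form_f; [apply: hp; apply: f_inW | ]; lia.
have eu i : (1 <= i <= 4)%N -> ce i u = 0.
  move=> hi; have : ce i w = 0 by apply: we; lia.
  by rewrite he ceD (ez i hi) addr0.
have vf i : (1 <= i <= 6)%N -> cF i v = 0 by move=> hi; apply: V_cF.
have A2 := U3_e2 HpW Hp3 hu; have A4 := U3_e4 HpW Hp3 hu.
have A3 := U3_e3 HpW Hp3 hu; have A1 := U3_e1 HpW Hp3 hu; have A0 := U3_f1 HpW Hp3 hu.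
have B1 := U1_a Hp2 Hp12 hu1; have B2 := U1_b Hp2 Hp12 hu1.
have B3 := U1_c Hp2 Hp12 hu1; have B4 := U1_d Hp2 Hp12 hu1.
have W5 := wf 5 erefl; have W6 := wf 6 erefl.
subst w.
move: W5 W6; rewrite !cFD !vf // !add0r => W5 W6.
move: A1 A2 A3 A4; rewrite !eu // => A1 A2 A3 A4.
have h6 : cF 6 u = 0 by rewrite -[RHS]oppr0 -A2; ring.
have h3 : cF 3 u = 0 by rewrite -[RHS]oppr0 -A4; ring.
have h4 : cF 4 u = 0 by rewrite -A3; ring.
have h6' : cF 6 u1 = 0 by rewrite -W6 h6; ring.
have h3' : cF 3 u1 = 0 by rewrite -[RHS]oppr0 -B2 h6'; ring.
have h5 : cF 5 u = - cF 5 u1 by apply/eqP; rewrite -subr_eq0 opprK W5.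
have h2 : cF 2 u = - cF 5 u by rewrite -[RHS]subr0 -A1; ring.
have h1' : cF 5 u1 = cF 4 u1 by apply/eqP; rewrite -subr_eq0 B1.
split.
- by rewrite A0 B3 addr0.
- by rewrite h3 h3' addr0.
- by rewrite h2 h5 h1' B4 h4; ring.
Qed.

Lemma LD y w v u : v \in Vs -> u \in U2 y -> w = v + u -> cF 5 w = 0 ->
  y * cF 2 w - cF 4 w = 0.
Proof.
move=> hv hu he h5; have := U2_fun Hp2 Hp12 hu.
move: h5; rewrite he !cFD !(V_cF _ hv) // !add0r => h5.
by rewrite h5 addr0.
Qed.

End Coord.
Ltac perp_tac := apply: (span_core_pad (lin_formr _));
  [rewrite /U3core /= ?andbT; repeat (apply/andP; split); apply/eqP; form_simpl; try ring
  | let j := fresh "j" in let hj := fresh "hj" in move=> j hj; form_simpl; try ring].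

Section Key.
Variables (k : kase) (pW p1 p2 p3 : nat).
Hypothesis HpW : (6 + pW <= n)%N.
Hypothesis Hp3 : (6 + p3 <= n)%N.
Hypothesis Hp2 : (6 + p2 <= n)%N.
Hypothesis Hp12 : (p1 <= p2)%N.
Hypothesis H2 : (2%:R : F) != 0.

Definition Tr (x : F) : triple F n := ([:: Vs], [:: Ws pW], [:: U1s k p1; U2s k p2 x; U3s p3]).

Lemma id_B : f_ 2 - f_ 4 = (e_ 6 - e_ 1 - e_ 3) + (un1 - un3).
Proof. by apply: vec_ext => j; ev_simpl; ring. Qed.
Lemma id_C : f_ 2 + f_ 4 = (un1 - up) + ((e_ 6 + e_ 3 - e_ 1) + (up + un3)).
Proof. by apply: vec_ext => j; ev_simpl; ring. Qed.
Lemma id_D x : f_ 2 + x *: f_ 4 = (e_ 6 - e_ 1 + x *: e_ 3) + (un1 + x *: un3).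
Proof. by apply: vec_ext => j; ev_simpl; ring. Qed.
Lemma id_A : f_ 2 = e_ 6 + (f_ 2 - e_ 6).
Proof. by rewrite addrC subrK. Qed.

Lemma zA_W t : t \in Ws pW -> form (f_ 2 - e_ 6) t = 0.
Proof. by perp_tac. Qed.
Lemma zA_U3 t : t \in U3s p3 -> form (f_ 2 - e_ 6) t = 0.
Proof. by perp_tac. Qed.
Lemma zC_W t : t \in Ws pW -> form ((e_ 6 + e_ 3 - e_ 1) + (up + un3)) t = 0.
Proof. by perp_tac. Qed.

Lemma inV_comb (a b c : F) i j l : (1 <= i <= 6)%N -> (1 <= j <= 6)%N -> (1 <= l <= 6)%N ->
  a *: e_ i + b *: e_ j + c *: e_ l \in Vs.
Proof.
move=> hi hj hl; rewrite /e_.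
by repeat apply: rpredD; apply: rpredZ; apply: ev_inV; lia.
Qed.

Lemma key x y g : g *m gramJ F n *m g^T = gramJ F n -> act_triple g (Tr x) = Tr y -> x = y.
Proof.
move=> hg; rewrite /act_triple /Tr /=; case=> hV hW hU1 hU2 hU3.
have hK : Ukeep k p1 p2 y = act_vs g (Ukeep k p1 p2 x).
  by rewrite /Ukeep; case: (k) hU1 hU2 => hU1 hU2; rewrite ?hU1 ?hU2.
have pK z : (forall t, t \in Ukeep k p1 p2 x -> form z t = 0) ->
    forall t, t \in Ukeep k p1 p2 y -> form (z *m g) t = 0.
  by move=> hz; rewrite hK; apply: act_perp.
have mV v : v \in Vs -> v *m g \in Vs by move=> hv; rewrite -hV; apply: act_mem.
have mW v : v \in Ws pW -> v *m g \in Ws pW by move=> hv; rewrite -hW; apply: act_mem.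
have mU1 v : v \in U1s k p1 -> v *m g \in U1s k p1 by move=> hv; rewrite -hU1; apply: act_mem.
have mU2 v : v \in U2s k p2 x -> v *m g \in U2s k p2 y by move=> hv; rewrite -hU2; apply: act_mem.
have mU3 v : v \in U3s p3 -> v *m g \in U3s p3 by move=> hv; rewrite -hU3; apply: act_mem.
have pWW z : (forall t, t \in Ws pW -> form z t = 0) -> forall t, t \in Ws pW -> form (z *m g) t = 0.
  by move=> hz; rewrite -{1}hW; apply: act_perp.
have pU3 z : (forall t, t \in U3s p3 -> form z t = 0) -> forall t, t \in U3s p3 -> form (z *m g) t = 0.
  by move=> hz; rewrite -{1}hU3; apply: act_perp.
set A := f_ 2 *m g; set B := f_ 4 *m g.
have hf2 : f_ 2 \in Ws pW by apply: f_inW.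
have hf4 : f_ 4 \in Ws pW by apply: f_inW.
have hA : A \in Ws pW by apply: mW.
have hB : B \in Ws pW by apply: mW.
have [a1 a3 a4] : [/\ cF 1 A = 0, cF 3 A = 0 & cF 4 A = 0].
  apply: (LA HpW Hp3 Hp2 Hp12 (v := e_ 6 *m g) (z := (f_ 2 - e_ 6) *m g)) => //.
  - by apply: mV; rewrite /e_; apply: ev_inV; lia.
  - by apply: pWW; apply: zA_W.
  - by apply: pU3; apply: zA_U3.
  - by rewrite /A -mulmxDl -id_A.
have [b1 b3 b24] : [/\ cF 1 (A - B) = 0, cF 3 (A - B) = 0 & cF 2 (A - B) + cF 4 (A - B) = 0].
  apply: (LB HpW Hp3 (k := k) (p1 := p1) (p2 := p2) (y := y) (v := (e_ 6 - e_ 1 - e_ 3) *m g) (u := (un1 - un3) *m g)).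
  - exact: rpredB.
  - rewrite /A /B -mulmxBl; apply: pK => t ht; exact: (keep_perp Hp2 Hp12 ht).
  - by apply: mV; rewrite /e_; apply: rpredB; [apply: rpredB|]; apply: ev_inV; lia.
  - by apply: mU3; apply: rpredB; apply: core_inU3; rewrite !inE eqxx ?orbT.
  - by rewrite /A /B -mulmxBl -mulmxDl -id_B.
have [c1 c3 c24] : [/\ cF 1 (A + B) = 0, cF 3 (A + B) = 0 & cF 2 (A + B) - cF 4 (A + B) = 0].
  apply: (LC HpW Hp3 Hp2 Hp12 (u := (un1 - up) *m g) (v := (e_ 6 + e_ 3 - e_ 1) *m g) (u1 := (up + un3) *m g)).
  - exact: rpredD.
  - by apply: mU3; apply: rpredB; apply: core_inU3; rewrite !inE eqxx ?orbT.
  - by apply: mV; rewrite /e_; apply: rpredB; [apply: rpredD|]; apply: ev_inV; lia.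
  - by apply: mU1; apply: U1_wit.
  - by rewrite -mulmxDl; apply: pWW; apply: zC_W.
  - by rewrite /A /B -!mulmxDl id_C.
have d : y * cF 2 (A + x *: B) - cF 4 (A + x *: B) = 0.
  apply: (LD Hp2 Hp12 (v := (e_ 6 - e_ 1 + x *: e_ 3) *m g) (u := (un1 + x *: un3) *m g)).
  - by apply: mV; rewrite /e_; apply: rpredD; [apply: rpredB|apply: rpredZ]; apply: ev_inV; lia.
  - by apply: mU2; apply: U2_wit.
  - by rewrite /A /B scalemxAl -!mulmxDl id_D.
  - by apply: (W_cF HpW Hp3 _ (w := A + x *: B)); [lia | apply: rpredD; [|apply: rpredZ]].
move: b24 c24 d; rewrite !cFB !cFD !cFZ a4 => b24 c24 d.
have e1 : 2%:R * (cF 2 A - cF 4 B) = (cF 2 A - cF 2 B + (0 - cF 4 B)) + (cF 2 A + cF 2 B - (0 + cF 4 B)) by ring.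
rewrite b24 c24 addr0 in e1.
move/eqP: e1; rewrite mulf_eq0 (negbTE H2) /= subr_eq0 => /eqP eA.
have e2 : 2%:R * cF 2 B = (cF 2 A + cF 2 B - (0 + cF 4 B)) - (cF 2 A - cF 2 B + (0 - cF 4 B)) by ring.
rewrite b24 c24 subr0 in e2.
move/eqP: e2; rewrite mulf_eq0 (negbTE H2) /= => /eqP eB.
have ed : (y - x) * cF 2 A = y * (cF 2 A + x * cF 2 B) - (0 + x * cF 4 B) by rewrite eB -eA; ring.
rewrite d in ed; move/eqP: ed; rewrite mulf_eq0 => /orP [/eqP hxy | /eqP ha].
  by apply/eqP; rewrite eq_sym -subr_eq0 hxy.
exfalso.
have fzA : fzero A.
  move=> j hj; have -> : j = (n.*2 - (n.*2 - j))%N by lia.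
  have : (1 <= n.*2 - j <= n)%N by lia.
  move: (n.*2 - j)%N => i hi.
  change (cF i A = 0).
  case: i hi => [|[|[|[|[|i]]]]] hi; first lia.
  - exact: a1.
  - exact: ha.
  - exact: a3.
  - exact: a4.
  - by apply: (W_cF HpW Hp3 _ hA); lia.
have fz2 : fzero (e_ 2 *m g) by apply: V_fzero; apply: mV; rewrite /e_; apply: ev_inV; lia.
have := form_fzero fzA fz2; rewrite /A form_g // form_e //.
by ev_simpl; move/eqP; rewrite oner_eq0.
Qed.

Lemma Vs_dim : \dim Vs = n.
Proof. by rewrite /Vs /Vg dim_free ?size_map ?size_iota //; apply: free_padl; lia. Qed.

Lemma Tr_inT x (b g1 g2 g3 : nat) : b = (4 + pW)%N -> g1 = (c1 k + p1)%N ->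
  (g1 + g2 = c2 k + p2)%N -> (g1 + g2 + g3 = 5 + p3)%N -> (p2 <= p3)%N ->
  in_T [:: n] [:: b] [:: g1; g2; g3] (Tr x).
Proof.
move=> hb h1 h2 h3 h23; split; [|split].
- split => //; split; [|split].
  + by case=> [|j] // _; rewrite big_ord1 /= Vs_dim.
  + by case.
  + exact: V_iso.
- split => //; split; [|split].
  + by case=> [|j] // _; rewrite big_ord1 /= (W_dim HpW Hp3) hb.
  + by case.
  + exact: (W_iso HpW Hp3).
- split => //; split; [|split].
  + case=> [|[|[|j]]] // _; rewrite !big_ord_recr big_ord0 /=.
    * by rewrite (U1_dim k Hp2 Hp12) h1.
    * by rewrite (U2_dim k Hp2 Hp12) -h2; lia.
    * by rewrite (U3_dim HpW Hp3) -h3; lia.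
  + case=> [|[|j]] // _ /=.
    * exact: (U12 k Hp2 Hp12 x).
    * exact: (U23 k Hp2 Hp12 x h23).
  + exact: (U3_iso HpW Hp3).
Qed.
Lemma key2 x z t : same_orbit (Tr x) t -> same_orbit (Tr z) t -> x = z.
Proof.
move=> [g [[_ hg] Hg]] [h [[hu hh] Hh]].
apply: (key (g := g *m invmx h)); first exact: orth_inv.
by rewrite actT_mul Hg -Hh -actT_mul mulmxV // actT_one.
Qed.

Lemma final (Finf : forall s : seq F, exists x : F, x \notin s) b g1 g2 g3 :
  b = (4 + pW)%N -> g1 = (c1 k + p1)%N ->
  (g1 + g2 = c2 k + p2)%N -> (g1 + g2 + g3 = 5 + p3)%N -> (p2 <= p3)%N ->
  infinitely_many_orbits F n [:: n] [:: b] [:: g1; g2; g3].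
Proof.
move=> hb h1 h2 h3 h23 [s Hs].
have [L HL] := @avoid F _ (fun x t => same_orbit (Tr x) t) (fun t x z => @key2 x z t) s.
have [x hx] := Finf L.
have [t' ht' ho] := Hs (Tr x) (Tr_inT x hb h1 h2 h3 h23).
exact: (HL x hx t' ht' ho).
Qed.
End Key.
End Config.

Theorem proposition3p15 (F : fieldType)
  (F_infinite : forall s : seq F, exists x : F, x \notin s)
  (F_char : (2%:R : F) != 0)
  (n beta g1 g2 g3 : nat)
  (hb4 : (4 <= beta)%N) (hbn : (beta <= n - 2)%N)
  (hg1 : (0 < g1)%N) (hg2 : (0 < g2)%N) (hg3 : (0 < g3)%N)
  (hsum : (g1 + g2 + g3 < n)%N)
  (hmin : (2 <= minn g1 g2)%N \/ (2 <= minn g1 g3)%N \/ (2 <= minn g2 g3)%N) :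
  infinitely_many_orbits F n [:: n] [:: beta] [:: g1; g2; g3].
Proof.
have Hn : (6 <= n)%N by lia.
case: hmin => [h | [h | h]].
- apply: (@final F n Hn K221 (beta - 4) (g1 - 2) (g1 + g2 - 4) (g1 + g2 + g3 - 5));
    rewrite ?/c1 ?/c2 /=; try lia; try done.
- apply: (@final F n Hn K212 (beta - 4) (g1 - 2) (g1 + g2 - 3) (g1 + g2 + g3 - 5));
    rewrite ?/c1 ?/c2 /=; try lia; try done.
- apply: (@final F n Hn K122 (beta - 4) (g1 - 1) (g1 + g2 - 3) (g1 + g2 + g3 - 5));
    rewrite ?/c1 ?/c2 /=; try lia; try done.
Qed.
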